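(* Let $\alpha\in\mathbb{C}$ with $\Re(\alpha)>-1/2$. Then for every $n\in\mathbb{N}_0$, $$(2\alpha+1)\,p_n(x;\alpha+1)=-x\,p_n''(x;\alpha)+(2x-1-2\alpha)\,p_n'(x;\alpha)+(1+2\alpha)\,p_n(x;\alpha).$$
   Context: Let $\mathcal{A}$ be the differential operator $\mathcal{A}f(x)=-x^2f''(x)-xf'(x)+x^2f(x)$ on functions of $x>0$, with iterates $\mathcal{A}^n$ ($\mathcal{A}^0$ = identity). For $\alpha\in\mathbb{C}$, $n\in\mathbb{N}_0$, $p_n(x;\alpha)=(-1)^n e^{x}x^{-\alpha}\,\mathcal{A}^n\big(e^{-x}x^{\alpha}\big)$; for $\Re(\alpha)>-1/2$ these are polynomials in $x$ of degree $n$. Primes denote derivatives in $x$. *)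

(* Defs.v *)
From Stdlib Require Import Reals.
Open Scope R_scope.

Record Cpx := mkC { Cre : R; Cim : R }.

Definition RtoC (r : R) : Cpx := mkC r 0.
Definition Cadd (z w : Cpx) : Cpx := mkC (Cre z + Cre w) (Cim z + Cim w).
Definition Copp (z : Cpx) : Cpx := mkC (- Cre z) (- Cim z).
Definition Cmul (z w : Cpx) : Cpx :=
  mkC (Cre z * Cre w - Cim z * Cim w) (Cre z * Cim w + Cim z * Cre w).

(** Principal power x^a for real x > 0 and complex a:
    x^a = exp(a ln x) = e^{Re a ln x} (cos(Im a ln x) + i sin(Im a ln x)). *)
Definition cpow (x : R) (a : Cpx) : Cpx :=
  mkC (exp (Cre a * ln x) * cos (Cim a * ln x))
      (exp (Cre a * ln x) * sin (Cim a * ln x)).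

Definition cderiv (f f' : R -> Cpx) : Prop :=
  forall x, 0 < x ->
    derivable_pt_lim (fun t => Cre (f t)) x (Cre (f' x)) /\
    derivable_pt_lim (fun t => Cim (f t)) x (Cim (f' x)).

(** [Aiter n f h] : h = A^n f on (0,+oo), where
    A g (x) = - x^2 g''(x) - x g'(x) + x^2 g(x). *)
Inductive Aiter : nat -> (R -> Cpx) -> (R -> Cpx) -> Prop :=
| Aiter_0 : forall f, Aiter 0 f f
| Aiter_S : forall n f g g1 g2 h,
    Aiter n f g -> cderiv g g1 -> cderiv g1 g2 ->
    (forall x, 0 < x ->
       h x = Cadd (Cadd (Cmul (RtoC (- (x ^ 2))) (g2 x))
                        (Cmul (RtoC (- x)) (g1 x)))
                  (Cmul (RtoC (x ^ 2)) (g x))) ->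
    Aiter (S n) f h.

Definition phi (a : Cpx) : R -> Cpx := fun x => Cmul (RtoC (exp (- x))) (cpow x a).

Definition is_pn (a : Cpx) (n : nat) (P : R -> Cpx) : Prop :=
  exists h, Aiter n (phi a) h /\
    forall x, 0 < x ->
      P x = Cmul (RtoC ((-1) ^ n * exp x)) (Cmul (cpow x (Copp a)) (h x)).

(* Main.v *)
Require Import Defs.
From Stdlib Require Import Reals Lra List FunctionalExtensionality.
Import ListNotations.
Open Scope R_scope.

Lemma deq f x l l' : derivable_pt_lim f x l -> l = l' -> derivable_pt_lim f x l'.
Proof. intros H <-; exact H. Qed.
Lemma dplus f g x l1 l2 : derivable_pt_lim f x l1 -> derivable_pt_lim g x l2 ->
  derivable_pt_lim (fun t => f t + g t) x (l1 + l2).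
Proof. apply derivable_pt_lim_plus. Qed.
Lemma dminus f g x l1 l2 : derivable_pt_lim f x l1 -> derivable_pt_lim g x l2 ->
  derivable_pt_lim (fun t => f t - g t) x (l1 - l2).
Proof. apply derivable_pt_lim_minus. Qed.
Lemma dmult f g x l1 l2 : derivable_pt_lim f x l1 -> derivable_pt_lim g x l2 ->
  derivable_pt_lim (fun t => f t * g t) x (l1 * g x + f x * l2).
Proof. apply derivable_pt_lim_mult. Qed.
Lemma dconst c x : derivable_pt_lim (fun _ => c) x 0.
Proof. apply derivable_pt_lim_const. Qed.
Lemma did x : derivable_pt_lim (fun t => t) x 1.
Proof. apply derivable_pt_lim_id. Qed.
Lemma dcomp f g x l1 l2 : derivable_pt_lim f x l1 -> derivable_pt_lim g (f x) l2 ->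
  derivable_pt_lim (fun t => g (f t)) x (l2 * l1).
Proof. apply derivable_pt_lim_comp. Qed.
Lemma ddiv f g x l1 l2 : derivable_pt_lim f x l1 -> derivable_pt_lim g x l2 -> g x <> 0 ->
  derivable_pt_lim (fun t => f t / g t) x ((l1 * g x - l2 * f x) / Rsqr (g x)).
Proof. apply derivable_pt_lim_div. Qed.

Lemma dpl_loc f g x l : 0 < x -> (forall t, 0 < t -> f t = g t) ->
  derivable_pt_lim f x l -> derivable_pt_lim g x l.
Proof.
  intros Hx He H eps Heps. destruct (H eps Heps) as [d Hd].
  assert (Hp : 0 < Rmin d x) by (apply Rmin_pos; [apply cond_pos | lra]).
  exists (mkposreal _ Hp). intros h Hh Hlt. simpl in Hlt.
  assert (Hl1 : Rabs h < d) by (eapply Rlt_le_trans; [exact Hlt | apply Rmin_l]).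
  assert (Hl2 : Rabs h < x) by (eapply Rlt_le_trans; [exact Hlt | apply Rmin_r]).
  apply Rabs_def2 in Hl2.
  rewrite <- (He (x + h)) by lra. rewrite <- (He x) by lra. apply Hd; auto.
Qed.

Lemma Ceq z w : Cre z = Cre w -> Cim z = Cim w -> z = w.
Proof. destruct z, w; simpl; intros; subst; auto. Qed.

Definition Csub z w := Cadd z (Copp w).
Lemma Cring_th : ring_theory (RtoC 0) (RtoC 1) Cadd Cmul Csub Copp (@eq Cpx).
Proof.
  constructor; intros; repeat match goal with z : Cpx |- _ => destruct z end;
  unfold Csub, Cadd, Cmul, Copp, RtoC; simpl; f_equal; ring.
Qed.
Add Ring Cring : Cring_th.

Definition CD (f : R -> Cpx) x l :=
  derivable_pt_lim (fun t => Cre (f t)) x (Cre l) /\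
  derivable_pt_lim (fun t => Cim (f t)) x (Cim l).

Lemma CD_unique f x l1 l2 : CD f x l1 -> CD f x l2 -> l1 = l2.
Proof. intros [A B] [C D]; apply Ceq; eapply uniqueness_limite; eauto. Qed.
Lemma CD_unique' f x l1 l2 l3 : CD f x l1 -> CD f x l2 -> l2 = l3 -> l1 = l3.
Proof. intros A B <-; eapply CD_unique; eauto. Qed.
Lemma CD_eqv f x l l' : CD f x l -> l = l' -> CD f x l'.
Proof. intros H <-; exact H. Qed.
Lemma CD_ext f g x l : (forall t, f t = g t) -> CD f x l -> CD g x l.
Proof. intros He H. assert (f = g) as <- by (apply functional_extensionality; auto). exact H. Qed.
Lemma CD_loc f g x l : 0 < x -> (forall t, 0 < t -> f t = g t) -> CD f x l -> CD g x l.
Proof. intros Hx He [A B]; split; (eapply dpl_loc; [exact Hx| |eassumption]); intros t Ht; simpl; rewrite He; auto. Qed.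
Lemma CD_const c x : CD (fun _ => c) x (RtoC 0).
Proof. split; apply dconst. Qed.
Lemma CD_id x : CD (fun t => RtoC t) x (RtoC 1).
Proof. split; simpl; [apply did | apply dconst]. Qed.
Lemma CD_add f g x l1 l2 : CD f x l1 -> CD g x l2 -> CD (fun t => Cadd (f t) (g t)) x (Cadd l1 l2).
Proof. intros [A B] [C D]; split; simpl; apply dplus; auto. Qed.
Lemma CD_mul f g x l1 l2 : CD f x l1 -> CD g x l2 ->
  CD (fun t => Cmul (f t) (g t)) x (Cadd (Cmul l1 (g x)) (Cmul (f x) l2)).
Proof.
  intros [A B] [C D]; split; simpl.
  - eapply deq. apply dminus; apply dmult; eauto. cbv beta; ring.
  - eapply deq. apply dplus; apply dmult; eauto. cbv beta; ring.
Qed.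

Fixpoint ev (p : list Cpx) (x : R) : Cpx :=
  match p with nil => RtoC 0 | c :: p' => Cadd c (Cmul (RtoC x) (ev p' x)) end.
Fixpoint padd (p q : list Cpx) : list Cpx :=
  match p, q with
  | nil, _ => q
  | _, nil => p
  | a :: p', b :: q' => Cadd a b :: padd p' q'
  end.
Definition pscal c (p : list Cpx) := map (Cmul c) p.
Definition pX (p : list Cpx) := RtoC 0 :: p.
Fixpoint dp (p : list Cpx) : list Cpx :=
  match p with nil => nil | c :: p' => padd p' (pX (dp p')) end.

Lemma ev_padd p q x : ev (padd p q) x = Cadd (ev p x) (ev q x).
Proof.
  revert q; induction p as [|a p IH]; intros [|b q]; simpl; try ring.
  rewrite IH; ring.
Qed.
Lemma ev_pscal c p x : ev (pscal c p) x = Cmul c (ev p x).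
Proof. induction p as [|a p IH]; simpl; [ring|]. rewrite IH; ring. Qed.
Lemma ev_pX p x : ev (pX p) x = Cmul (RtoC x) (ev p x).
Proof. simpl; ring. Qed.

Lemma ev_deriv p x : CD (ev p) x (ev (dp p) x).
Proof.
  induction p as [|a p IH].
  - apply CD_const.
  - change (CD (fun t => Cadd a (Cmul (RtoC t) (ev p t))) x (ev (dp (a :: p)) x)).
    eapply CD_eqv. apply CD_add. apply CD_const. apply CD_mul. apply CD_id. apply IH.
    cbv beta. simpl dp. rewrite ev_padd, ev_pX. ring.
Qed.

Lemma dp_ext p q x : (forall t, ev p t = ev q t) -> ev (dp p) x = ev (dp q) x.
Proof. intros H. eapply CD_unique. apply ev_deriv. eapply CD_ext; [|apply ev_deriv]. intros; symmetry; auto. Qed.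

Lemma ev_dp_padd p q x : ev (dp (padd p q)) x = Cadd (ev (dp p) x) (ev (dp q) x).
Proof.
  eapply CD_unique. apply ev_deriv.
  eapply CD_ext; [|apply CD_add; apply ev_deriv]. intros; simpl; rewrite ev_padd; auto.
Qed.
Lemma ev_dp_pscal c p x : ev (dp (pscal c p)) x = Cmul c (ev (dp p) x).
Proof.
  eapply CD_unique'. apply ev_deriv.
  apply (CD_ext (fun t => Cmul c (ev p t))). intros; rewrite ev_pscal; auto.
  apply CD_mul; [apply CD_const| apply ev_deriv]. cbv beta; ring.
Qed.
Lemma ev_dp_pX p x : ev (dp (pX p)) x = Cadd (ev p x) (Cmul (RtoC x) (ev (dp p) x)).
Proof. change (dp (pX p)) with (padd p (pX (dp p))). rewrite ev_padd, ev_pX; auto. Qed.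

Lemma ev_dp2_padd p q x : ev (dp (dp (padd p q))) x = Cadd (ev (dp (dp p)) x) (ev (dp (dp q)) x).
Proof.
  rewrite (dp_ext (dp (padd p q)) (padd (dp p) (dp q))). apply ev_dp_padd.
  intros; rewrite ev_dp_padd, ev_padd; auto.
Qed.
Lemma ev_dp2_pscal c p x : ev (dp (dp (pscal c p))) x = Cmul c (ev (dp (dp p)) x).
Proof.
  rewrite (dp_ext (dp (pscal c p)) (pscal c (dp p))). apply ev_dp_pscal.
  intros; rewrite ev_dp_pscal, ev_pscal; auto.
Qed.
Lemma ev_dp2_pX p x : ev (dp (dp (pX p))) x =
  Cadd (ev (dp p) x) (Cadd (ev (dp p) x) (Cmul (RtoC x) (ev (dp (dp p)) x))).
Proof.
  change (dp (pX p)) with (padd p (pX (dp p))). rewrite ev_dp_padd, ev_dp_pX; auto.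
Qed.

Definition C2 := Cadd (RtoC 1) (RtoC 1).
Definition Tp b p :=
  padd (pX (pX (dp (dp p))))
   (padd (pscal (Cadd (RtoC 1) (Cmul C2 b)) (pX (dp p)))
    (padd (pscal (Copp C2) (pX (pX (dp p))))
     (padd (pscal (Copp (Cadd (Cmul C2 b) (RtoC 1))) (pX p)) (pscal (Cmul b b) p)))).
Definition Rp b q :=
  padd (pscal (Copp (RtoC 1)) (pX (dp (dp q))))
   (padd (pscal C2 (pX (dp q)))
    (padd (pscal (Copp (Cadd (RtoC 1) (Cmul C2 b))) (dp q))
     (pscal (Cadd (RtoC 1) (Cmul C2 b)) q))).

Ltac expand :=
  unfold Tp, Rp;
  repeat (rewrite ?ev_dp2_padd, ?ev_dp2_pscal, ?ev_dp2_pX,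
                  ?ev_dp_padd, ?ev_dp_pscal, ?ev_dp_pX, ?ev_padd, ?ev_pscal, ?ev_pX).

Lemma key b q x : ev (Tp (Cadd b (RtoC 1)) (Rp b q)) x = ev (Rp b (Tp b q)) x.
Proof. expand. unfold C2. ring. Qed.

Lemma dlin c x : 0 < x -> derivable_pt_lim (fun t => c * ln t) x (c / x).
Proof. intros Hx. eapply deq. apply dmult. apply dconst. apply derivable_pt_lim_ln; auto. cbv beta. unfold Rdiv; ring. Qed.

Lemma CD_cpow a x : 0 < x -> CD (fun t => cpow t a) x (Cmul (mkC (Cre a / x) (Cim a / x)) (cpow x a)).
Proof.
  intros Hx. destruct a as [ar ai]. unfold cpow; split; simpl.
  - eapply deq. apply dmult.
    apply (dcomp (fun t => ar * ln t) exp). apply dlin; auto. apply derivable_pt_lim_exp.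
    apply (dcomp (fun t => ai * ln t) cos). apply dlin; auto. apply derivable_pt_lim_cos.
    cbv beta. unfold Rdiv; ring.
  - eapply deq. apply dmult.
    apply (dcomp (fun t => ar * ln t) exp). apply dlin; auto. apply derivable_pt_lim_exp.
    apply (dcomp (fun t => ai * ln t) sin). apply dlin; auto. apply derivable_pt_lim_sin.
    cbv beta. unfold Rdiv; ring.
Qed.

Lemma dneg x : derivable_pt_lim (fun t => - t) x (-1).
Proof. apply (derivable_pt_lim_opp id). apply derivable_pt_lim_id. Qed.

Lemma CD_expn x : CD (fun t => RtoC (exp (- t))) x (RtoC (- exp (- x))).
Proof.
  split; simpl.
  - eapply deq. apply (dcomp (fun t => - t) exp). apply dneg. apply derivable_pt_lim_exp. ring.
  - apply dconst.
Qed.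

Definition u (a : Cpx) t := mkC (Cre a / t - 1) (Cim a / t).
Definition du (a : Cpx) t := mkC (- Cre a / (t * t)) (- Cim a / (t * t)).

Lemma CD_phi a x : 0 < x -> CD (phi a) x (Cmul (u a x) (phi a x)).
Proof.
  intros Hx. unfold phi. eapply CD_eqv. apply CD_mul. apply CD_expn. apply CD_cpow; auto.
  cbv beta. generalize (cpow x a). intros [cr ci]. destruct a as [ar ai].
  unfold u; apply Ceq; simpl; field; lra.
Qed.

Lemma CD_u a x : 0 < x -> CD (u a) x (du a x).
Proof.
  intros Hx. unfold u, du. split; simpl.
  - eapply deq. apply dminus. apply ddiv. apply dconst. apply did. lra. apply dconst.
    unfold Rsqr; field; lra.
  - eapply deq. apply ddiv. apply dconst. apply did. lra.
    unfold Rsqr; field; lra.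
Qed.

Definition Hf a q t := Cmul (phi a t) (ev q t).
Definition H1 a q t := Cmul (phi a t) (Cadd (ev (dp q) t) (Cmul (u a t) (ev q t))).
Definition H2 a q t := Cmul (phi a t)
  (Cadd (Cmul (u a t) (Cadd (ev (dp q) t) (Cmul (u a t) (ev q t))))
        (Cadd (ev (dp (dp q)) t) (Cadd (Cmul (du a t) (ev q t)) (Cmul (u a t) (ev (dp q) t))))).

Lemma CD_Hf a q x : 0 < x -> CD (Hf a q) x (H1 a q x).
Proof.
  intros Hx. unfold Hf. eapply CD_eqv. apply CD_mul. apply CD_phi; auto. apply ev_deriv.
  unfold H1. ring.
Qed.

Lemma CD_H1 a q x : 0 < x -> CD (H1 a q) x (H2 a q x).
Proof.
  intros Hx. unfold H1. eapply CD_eqv. apply CD_mul. apply CD_phi; auto.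
  apply CD_add. apply ev_deriv. apply CD_mul. apply CD_u; auto. apply ev_deriv.
  unfold H2. ring.
Qed.

Definition Lp a q := pscal (Copp (RtoC 1)) (Tp a q).

Lemma Astep a q x : 0 < x ->
  Cadd (Cadd (Cmul (RtoC (- (x ^ 2))) (H2 a q x)) (Cmul (RtoC (- x)) (H1 a q x)))
       (Cmul (RtoC (x ^ 2)) (Hf a q x)) = Hf a (Lp a q) x.
Proof.
  intros Hx. unfold Lp, Hf, H1, H2. expand.
  generalize (phi a x) (ev q x) (ev (dp q) x) (ev (dp (dp q)) x).
  intros [pr pi] [q0r q0i] [q1r q1i] [q2r q2i]. destruct a as [ar ai].
  unfold u, du, C2; apply Ceq; simpl; field; lra.
Qed.

Fixpoint pn a n := match n with 0%nat => [RtoC 1] | S m => Tp a (pn a m) end.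
Fixpoint rn a n := match n with 0%nat => [RtoC 1] | S m => Lp a (rn a m) end.

Lemma Tp_ext b p q x : (forall t, ev p t = ev q t) -> ev (Tp b p) x = ev (Tp b q) x.
Proof.
  intros H. expand.
  rewrite (H x), (dp_ext p q x H), (dp_ext (dp p) (dp q) x (fun t => dp_ext p q t H)). reflexivity.
Qed.

Lemma Tp_scal b c p x : ev (Tp b (pscal c p)) x = Cmul c (ev (Tp b p) x).
Proof. expand. ring. Qed.

Lemma rn_pn a n x : ev (rn a n) x = Cmul (RtoC ((-1) ^ n)) (ev (pn a n) x).
Proof.
  revert x; induction n as [|n IH]; intros x.
  - simpl. ring.
  - simpl rn; simpl pn. unfold Lp. rewrite ev_pscal.
    rewrite (Tp_ext a (rn a n) (pscal (RtoC ((-1) ^ n)) (pn a n))).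
    + rewrite Tp_scal. generalize (ev (Tp a (pn a n)) x). intros [zr zi].
      apply Ceq; simpl; ring.
    + intros t; rewrite IH, ev_pscal; auto.
Qed.

Lemma mainpoly a n x :
  Cmul (Cadd (Cmul C2 a) (RtoC 1)) (ev (pn (Cadd a (RtoC 1)) n) x) = ev (Rp a (pn a n)) x.
Proof.
  revert x; induction n as [|n IH]; intros x.
  - simpl pn. expand. simpl. unfold C2. ring.
  - simpl pn. rewrite <- Tp_scal.
    rewrite (Tp_ext _ _ (Rp a (pn a n))).
    + apply key.
    + intros t; rewrite ev_pscal; apply IH.
Qed.

Lemma Aiter_uniq a : forall n f h, Aiter n f h -> f = phi a ->
  forall x, 0 < x -> h x = Hf a (rn a n) x.
Proof.
  intros n f h HA. induction HA as [f|n f g g1 g2 h HA IH Hg1 Hg2 Hh]; intros Hf0 x Hx.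
  - subst f. unfold Hf; simpl. ring.
  - specialize (IH Hf0).
    assert (E1 : forall t, 0 < t -> g1 t = H1 a (rn a n) t).
    { intros t Ht. eapply CD_unique. apply (Hg1 t Ht).
      eapply CD_loc; [exact Ht| |apply CD_Hf; exact Ht]. intros s Hs; symmetry; auto. }
    assert (E2 : g2 x = H2 a (rn a n) x).
    { eapply CD_unique. apply (Hg2 x Hx).
      eapply CD_loc; [exact Hx| |apply CD_H1; exact Hx]. intros s Hs; symmetry; auto. }
    rewrite Hh by auto. rewrite E2, E1, IH by auto. apply Astep; auto.
Qed.

Lemma Aiter_exist a : forall n, exists h, Aiter n (phi a) h /\
  forall x, 0 < x -> h x = Hf a (rn a n) x.
Proof.
  induction n as [|n [g [Hg Heq]]].
  - exists (phi a). split. constructor. intros; unfold Hf; simpl; ring.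
  - exists (Hf a (rn a (S n))). split; [|auto].
    eapply Aiter_S with (g1 := H1 a (rn a n)) (g2 := H2 a (rn a n)).
    + exact Hg.
    + intros x Hx. eapply CD_loc; [exact Hx| |apply CD_Hf; exact Hx].
      intros s Hs; symmetry; auto.
    + intros x Hx. apply CD_H1; auto.
    + intros x Hx. rewrite Heq by auto. symmetry. apply Astep; auto.
Qed.

Lemma cpow_inv x a : Cmul (cpow x (Copp a)) (cpow x a) = RtoC 1.
Proof.
  destruct a as [ar ai]. unfold cpow, Copp; apply Ceq; simpl;
  replace (- ar * ln x) with (- (ar * ln x)) by ring;
  replace (- ai * ln x) with (- (ai * ln x)) by ring;
  rewrite exp_Ropp, cos_neg, sin_neg;
  assert (He : exp (ar * ln x) <> 0) by (apply Rgt_not_eq, exp_pos).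
  - transitivity (Rsqr (sin (ai * ln x)) + Rsqr (cos (ai * ln x))).
    + unfold Rsqr; field; auto.
    + apply sin2_cos2.
  - field; auto.
Qed.

Lemma RtoC_mul r s : RtoC (r * s) = Cmul (RtoC r) (RtoC s).
Proof. apply Ceq; simpl; ring. Qed.

Lemma recover a n x z : 0 < x ->
  Cmul (RtoC ((-1) ^ n * exp x)) (Cmul (cpow x (Copp a))
     (Cmul (Cmul (RtoC (exp (- x))) (cpow x a)) (Cmul (RtoC ((-1) ^ n)) z))) = z.
Proof.
  intros Hx. rewrite RtoC_mul.
  transitivity (Cmul (Cmul (Cmul (RtoC ((-1)^n)) (RtoC ((-1)^n)))
     (Cmul (Cmul (RtoC (exp x)) (RtoC (exp (- x)))) (Cmul (cpow x (Copp a)) (cpow x a)))) z).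
  - ring.
  - rewrite cpow_inv, <- !RtoC_mul, <- Rpow_mult_distr, exp_Ropp.
    replace (-1 * -1) with 1 by ring. rewrite pow1.
    replace (exp x * / exp x) with 1 by (field; apply Rgt_not_eq, exp_pos).
    replace (1 * (1 * 1)) with 1 by ring. ring.
Qed.

Lemma exist_pn b n : is_pn b n (ev (pn b n)).
Proof.
  destruct (Aiter_exist b n) as [h [Hh Heq]]. exists h. split; auto.
  intros x Hx. rewrite Heq by auto. unfold Hf. rewrite rn_pn. symmetry; apply recover; auto.
Qed.

Lemma is_pn_char b n P : is_pn b n P -> forall x, 0 < x -> P x = ev (pn b n) x.
Proof.
  intros [h [Hh HP]] x Hx. rewrite HP by auto.
  rewrite (Aiter_uniq b n (phi b) h Hh eq_refl x Hx). unfold Hf. rewrite rn_pn. apply recover; auto.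
Qed.

Theorem mainTheorem2 (a : Cpx) (Ha : -1/2 < Cre a) :
  forall n : nat,
    (exists P, is_pn a n P) /\
    (exists Q, is_pn (Cadd a (RtoC 1)) n Q) /\
    (forall P, is_pn a n P -> exists P1 P2, cderiv P P1 /\ cderiv P1 P2) /\
    (forall P Q P1 P2,
       is_pn a n P -> is_pn (Cadd a (RtoC 1)) n Q ->
       cderiv P P1 -> cderiv P1 P2 ->
       forall x, 0 < x ->
         Cmul (Cadd (Cmul (RtoC 2) a) (RtoC 1)) (Q x) =
         Cadd (Cadd (Cmul (RtoC (- x)) (P2 x))
                    (Cmul (Cadd (RtoC (2 * x - 1)) (Copp (Cmul (RtoC 2) a))) (P1 x)))
              (Cmul (Cadd (RtoC 1) (Cmul (RtoC 2) a)) (P x))).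
Proof.
  intros n. split; [|split; [|split]].
  - eexists; apply exist_pn.
  - eexists; apply exist_pn.
  - intros P HP. exists (ev (dp (pn a n))), (ev (dp (dp (pn a n)))). split; intros x Hx.
    + eapply CD_loc; [exact Hx| |apply ev_deriv]. intros t Ht; symmetry; apply (is_pn_char a n P HP t Ht).
    + apply ev_deriv.
  - intros P Q P1 P2 HP HQ HP1 HP2 x Hx.
    assert (E1 : forall t, 0 < t -> P1 t = ev (dp (pn a n)) t).
    { intros t Ht. eapply CD_unique. apply (HP1 t Ht).
      eapply CD_loc; [exact Ht| |apply ev_deriv]. intros s Hs; symmetry; apply (is_pn_char a n P HP s Hs). }
    assert (E2 : P2 x = ev (dp (dp (pn a n))) x).
    { eapply CD_unique. apply (HP2 x Hx).
      eapply CD_loc; [exact Hx| |apply ev_deriv]. intros s Hs; symmetry; auto. }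
    rewrite E2, E1, (is_pn_char a n P HP x Hx), (is_pn_char _ n Q HQ x Hx) by auto.
    replace (RtoC 2) with C2 by (apply Ceq; simpl; ring).
    rewrite mainpoly. unfold Rp. rewrite !ev_padd, !ev_pscal, !ev_pX.
    generalize (ev (pn a n) x) (ev (dp (pn a n)) x) (ev (dp (dp (pn a n))) x).
    intros [q0r q0i] [q1r q1i] [q2r q2i]. destruct a as [ar ai].
    unfold C2; apply Ceq; simpl; ring.
Qed.
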